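(* Let $N$ be a phylogenetic network on $X\subseteq[n]$ and let $i,j\in[n]$, $i\neq j$. Then $(i,j)$ is a cherry of $N$ if and only if $(i,j)$ is a cherry of the multiset $\boldsymbol\mu(N)$.
   Context: A (binary) phylogenetic network on a finite set $X\subseteq[n]=\{1,\dots,n\}$ is a directed acyclic graph $N=(V,A)$ without parallel arcs in which every node is exactly one of: the root (indegree 0, outdegree 1; there is exactly one), a leaf (indegree 1, outdegree 0), a tree node (indegree 1, outdegree 2), or a reticulation (indegree 2, outdegree 1); the leaves are identified with the elements of $X$. $V_T(N)$ denotes the set of leaves and tree nodes, $V_H(N)$ the set of reticulations. Paths are directed and trivial paths of length 0 are allowed; $m(u,v)$ denotes the number of directed paths from $u$ to $v$. Extended $\mu$-vectors: for $u\in V$ and $i\in[n]$, $\mu_i(u)=m(u,i)$ (which is $0$ if $i\notin X$), and $\mu_0(u)=\sum_{h\in V_H(N)} m(u,h)$; $\mu(u)=(\mu_0(u),\dots,\mu_n(u))$. The (extended) $\mu$-representation $\boldsymbol\mu(N)$ is the multiset $\{\mu(u)\mid u\in V_T(N)\}$, each vector counted with the number of nodes of $V_T(N)$ having it. For $S\subseteq\{0,\dots,n\}$, $\delta_S$ is the 0/1 indicator vector of $S$ indexed by $0,\dots,n$, and $\delta_{j_1,\dots,j_k}=\delta_{\{j_1,\dots,j_k\}}$. In a network, for distinct leaves $i,j$ with parents $p_i,p_j$, $(i,j)$ is a cherry of $N$ if $p_i=p_j$. For a finite multiset $\boldsymbol\mu$ of vectors of nonnegative integers indexed by $0,\dots,n$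 and distinct $i,j\in[n]$, $(i,j)$ is a cherry of $\boldsymbol\mu$ if $\delta_{i,j}$ belongs to $\boldsymbol\mu$ with multiplicity exactly $1$, and every element $\mu=(\mu_0,\dots,\mu_n)$ of $\boldsymbol\mu$ other than $\delta_i$ and $\delta_j$ satisfies $\mu_i=\mu_j$. *)

(* Defs.v *)
From mathcomp Require Import all_boot.
Set Implicit Arguments. Unset Strict Implicit. Unset Printing Implicit Defensive.

Section Network.
Variables (V : finType) (A : rel V).

Definition indeg (v : V) : nat := #|[set u | A u v]|.
Definition outdeg (v : V) : nat := #|[set w | A v w]|.

Definition is_root (v : V) : bool := (indeg v == 0) && (outdeg v == 1).
Definition is_leaf (v : V) : bool := (indeg v == 1) && (outdeg v == 0).
Definition is_tree_node (v : V) : bool := (indeg v == 1) && (outdeg v == 2).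
Definition is_reticulation (v : V) : bool := (indeg v == 2) && (outdeg v == 1).

Definition acyclic : Prop :=
  forall (u : V) (p : seq V), path A u p -> last u p = u -> p = [::].

(* number of directed paths (vertex sequences u :: p, trivial path allowed)
   from u to v; in an acyclic graph every path has fewer than #|V| arcs,
   so this counts all directed paths. *)
Definition npaths (u v : V) : nat :=
  \sum_(k < #|V|) #|[set t : k.-tuple V | path A u t && (last u t == v)]|.

End Network.

(* A binary phylogenetic network on X ⊆ [n], X = set of leaf labels.
   lab identifies leaves with elements of [n] = {1..n} (injectively);
   its values on non-leaves are irrelevant. *)
Definition is_network (n : nat) (V : finType) (A : rel V) (lab : V -> nat) : Prop :=
  [/\ acyclic A,
      (exists r : V, is_root A r /\ forall r', is_root A r' -> r' = r),
      (forall v : V, [|| is_root A v, is_leaf A v, is_tree_node A v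
                       | is_reticulation A v]),
      (forall w : V, is_leaf A w -> 0 < lab w <= n) &
      (forall w w' : V, is_leaf A w -> is_leaf A w' -> lab w = lab w' -> w = w')].

Section Mu.
Variables (n : nat) (V : finType) (A : rel V) (lab : V -> nat).

(* mu_i(u) = m(u, i) for i in [n] (0 if i is not a leaf label) *)
Definition mu_leaf (i : nat) (u : V) : nat :=
  \sum_(w : V | is_leaf A w && (lab w == i)) npaths A u w.

Definition mu_ret (u : V) : nat :=
  \sum_(h : V | is_reticulation A h) npaths A u h.

Definition muvec (u : V) : {ffun 'I_n.+1 -> nat} :=
  [ffun k : 'I_n.+1 => if val k == 0 then mu_ret u else mu_leaf (val k) u].

(* the extended mu-representation, as a multiset (seq up to permutation)
   over the leaves and tree nodes V_T(N) *)
Definition mu_rep : seq {ffun 'I_n.+1 -> nat} :=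
  [seq muvec u | u <- enum V & is_leaf A u || is_tree_node A u].

Definition net_cherry (i j : nat) : Prop :=
  exists wi wj p : V, is_leaf A wi /\ is_leaf A wj /\ lab wi = i /\ lab wj = j /\
                          A p wi /\ A p wj.
End Mu.

Definition delta (n : nat) (S : seq nat) : {ffun 'I_n.+1 -> nat} :=
  [ffun k : 'I_n.+1 => nat_of_bool (val k \in S)].

Definition ms_cherry (n : nat) (mus : seq {ffun 'I_n.+1 -> nat}) (i j : 'I_n.+1) : Prop :=
  count_mem (delta n [:: val i; val j]) mus = 1 /\
  forall x, x \in mus -> x != delta n [:: val i] -> x != delta n [:: val j] -> x i = x j.

(* Main.v *)
Require Import Defs.
From mathcomp Require Import all_boot.
From mathcomp Require Import zify.
Set Implicit Arguments. Unset Strict Implicit. Unset Printing Implicit Defensive.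

Lemma card_set_sum (T : finType) (P : pred T) : #|[set x | P x]| = \sum_x P x.
Proof. rewrite -sum1_card big_mkcond /=; apply: eq_bigr => x _; by rewrite inE; case: (P x). Qed.

Lemma sum_eq_pred (T : finType) (P : pred T) (y : T) :
  \sum_(x | P x) (x == y) = P y.
Proof.
case Py: (P y).
  rewrite (bigD1 y) //= eqxx big1 // => x /andP[_ H]; by rewrite (negbTE H).
rewrite big1 // => x Px; apply/eqP; rewrite eqb0; apply/eqP => E; by rewrite -E Px in Py.
Qed.

Section Aux.
Variables (V : finType) (A : rel V).
Hypothesis ac : acyclic A.

Lemma no_back u x : A u x -> ~~ connect A x u.
Proof.
move=> Aux; apply/negP => /connectP [p Pp Hl].
have H := ac (u := u) (p := x :: p).
have : x :: p = [::] by apply: H; rewrite /= ?Aux ?Pp // -Hl.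
by [].
Qed.

Lemma path_uniq u t : path A u t -> uniq (u :: t).
Proof.
elim: t u => [|x t IH] u //= /andP[Aux Pt].
have := IH _ Pt; rewrite /= => ->; rewrite andbT.
apply/negP => Hu; move: (path_connect Pt Hu) => Hc.
by move: (no_back Aux); rewrite Hc.
Qed.

Definition rk (c : V) := #|[set x | connect A c x]|.

Lemma rk_lt u c : A u c -> rk c < rk u.
Proof.
move=> Auc; apply: proper_card; apply/properP; split.
  apply/subsetP => x; rewrite !inE => Hx; exact: connect_trans (connect1 Auc) Hx.
exists u; rewrite !inE ?connect0 //; exact: no_back.
Qed.

Lemma dag_ind (P : V -> Prop) :
  (forall u, (forall c, A u c -> P c) -> P u) -> forall u, P u.
Proof.
move=> IH u; have [m Hm] := ubnP (rk u); elim: m u Hm => // m IHm u Hu.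
apply: IH => c Ac; apply: IHm; exact: leq_trans (rk_lt Ac) Hu.
Qed.

Definition npk (u v : V) (k : nat) := #|[set t : k.-tuple V | path A u t && (last u t == v)]|.

Lemma tuple_sum (k : nat) (F : k.+1.-tuple V -> nat) :
  \sum_(t : k.+1.-tuple V) F t = \sum_(c : V) \sum_(t : k.-tuple V) F (cons_tuple c t).
Proof.
rewrite pair_big /= (reindex (fun p : V * k.-tuple V => cons_tuple p.1 p.2)) //=.
apply: onW_bij; exists (fun t => (thead t, behead_tuple t)).
  by case=> c t /=; congr pair; apply: val_inj.
move=> t; by rewrite [RHS]tuple_eta; apply: val_inj.
Qed.

Lemma npk_S u v k : npk u v k.+1 = \sum_(c | A u c) npk c v k.
Proof.
rewrite /npk card_set_sum tuple_sum [RHS]big_mkcond /=; apply: eq_bigr => c _.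
rewrite card_set_sum; case: (A u c) => //=.
by rewrite big1.
Qed.

Lemma npk_big u c v N : A u c -> #|V| = N.+1 -> npk c v N = 0.
Proof.
move=> Auc E; rewrite /npk; apply/eqP; rewrite cards_eq0; apply/eqP/setP => t.
rewrite !inE; apply/negP => /andP[Pt _].
have U : uniq (u :: c :: t) by apply: path_uniq; rewrite /= Auc.
have := max_card (mem (u :: c :: val t)); rewrite (card_uniqP U) /= size_tuple E.
by rewrite ltnn.
Qed.

Lemma npathsE u v : npaths A u v = (u == v) + \sum_(c | A u c) npaths A c v.
Proof.
have : 0 < #|V| by apply/card_gt0P; exists u.
have E0 : forall w, npaths A w v = \sum_(0 <= k < #|V|) npk w v k.
  by move=> w; rewrite big_mkord.
rewrite E0 (eq_bigr (fun c => \sum_(0<=k<#|V|) npk c v k)); last by move=> c _; rewrite E0.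
case E: #|V| => [//|N] _.
rewrite big_nat_recl //; congr addn.
  rewrite /npk card_set_sum (big_pred1 [tuple]) //=; last by move=> t; symmetry; apply/eqP; exact: tuple0.
under eq_bigr do rewrite npk_S.
rewrite exchange_big /=; apply: eq_bigr => c Auc.
by rewrite big_nat_recr //= (npk_big v Auc E) addn0.
Qed.

End Aux.
Lemma nar1 a b U : a + b <= U -> U = 0 -> 0 < a -> False. Proof. lia. Qed.
Lemma narG1 a b U d1 d2 : a + b <= U -> d1 + d2 <= a -> 0 < d1 -> 0 < U. Proof. lia. Qed.
Lemma narG2 a b U d1 d2 : a + b <= U -> d1 + d2 <= a -> 0 < d2 -> 0 < U. Proof. lia. Qed.
Lemma narGy a b U : a + b <= U -> 0 < b -> 0 < U. Proof. lia. Qed.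
Lemma nar2 a b U d1 d2 : a + b <= U -> d1 + d2 <= a -> 0 < d1 -> 0 < d2 -> U <= 1 -> False. Proof. lia. Qed.
Lemma nar3 a b U d1 d2 : a + b <= U -> d1 + d2 <= a -> 0 < d1 -> 0 < b -> U <= 1 -> False. Proof. lia. Qed.
Lemma nar4 a b U d1 d2 : a + b <= U -> d1 + d2 <= a -> 0 < d2 -> 0 < b -> U <= 1 -> False. Proof. lia. Qed.
Lemma pigeon (i j a b c : nat) : (a == i) || (a == j) -> (b == i) || (b == j) -> (c == i) || (c == j) ->
  a = b \/ a = c \/ b = c.
Proof. by do 3!case/orP => /eqP ->; tauto. Qed.

Section Net.
Variables (n : nat) (V : finType) (A : rel V) (lab : V -> nat).
Hypothesis HN : is_network n A lab.

Lemma ac_of : acyclic A. Proof. by case: HN. Qed.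
Lemma cls v : [|| is_root A v, is_leaf A v, is_tree_node A v | is_reticulation A v].
Proof. by case: HN. Qed.
Lemma lab_rng w : is_leaf A w -> 0 < lab w <= n. Proof. by case: HN => _ _ _ H _; apply: H. Qed.
Lemma lab_inj w w' : is_leaf A w -> is_leaf A w' -> lab w = lab w' -> w = w'.
Proof. by case: HN => _ _ _ _ H; apply: H. Qed.

Lemma leaf_nochild w c : is_leaf A w -> A w c = false.
Proof.
case/andP=> _; rewrite /outdeg cards_eq0 => /eqP E.
apply/negP => Awc; have : c \in [set x | A w x] by rewrite inE.
by rewrite E inE.
Qed.

Lemma npaths_leaf w v : is_leaf A w -> npaths A w v = (w == v).
Proof.
move=> L; rewrite (npathsE ac_of) big_pred0 ?addn0 // => c; exact: leaf_nochild.
Qed.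

Lemma leaf_parent w p q : is_leaf A w -> A p w -> A q w -> p = q.
Proof.
case/andP=> /cards1P [x E] _ Ap Aq.
have : p \in [set u | A u w] by rewrite inE.
have : q \in [set u | A u w] by rewrite inE.
by rewrite E !inE => /eqP -> /eqP ->.
Qed.

Lemma child_not_root u c : A u c -> ~~ is_root A c.
Proof.
move=> Auc; apply/negP => /andP[]; rewrite /indeg cards_eq0 => /eqP E _.
have : u \in [set x | A x c] by rewrite inE.
by rewrite E inE.
Qed.

Lemma has_child u : ~~ is_leaf A u -> exists c, A u c.
Proof.
move=> nL.
have : 0 < outdeg A u.
  move: (cls u); rewrite (negbTE nL) /is_root /is_tree_node /is_reticulation.
  by case/or4P => // /andP[_ /eqP ->].
by rewrite /outdeg => /card_gt0P [c]; rewrite inE => H; exists c.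
Qed.

Lemma tree_split u : is_tree_node A u -> exists c1 c2,
  [/\ c1 != c2, A u c1, A u c2, (forall x, A u x = (x == c1) || (x == c2)) &
     forall v, npaths A u v = (u == v) + npaths A c1 v + npaths A c2 v].
Proof.
case/andP=> _ /cards2P [c1 [c2 [n12 E]]].
have EA : forall x, A u x = (x == c1) || (x == c2).
  by move=> x; rewrite -in_set2 -E inE.
exists c1, c2; split => //; rewrite ?EA ?eqxx ?orbT // => v.
rewrite (npathsE ac_of) (bigD1 c1) ?EA ?eqxx //= (big_pred1 c2) ?addnA // => x /=.
rewrite EA; case: eqP => [->|] /=; last by rewrite andbT.
by rewrite (negbTE n12).
Qed.

Lemma npaths_refl u : 0 < npaths A u u.
Proof. by rewrite (npathsE ac_of) eqxx. Qed.

Lemma npaths_mono u c v : A u c -> npaths A c v <= npaths A u v.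
Proof. move=> Auc; rewrite [npaths A u v](npathsE ac_of) (bigD1 c) //=; lia. Qed.

Lemma reach_leaf u : exists2 w, is_leaf A w & 0 < npaths A u w.
Proof.
elim/(dag_ind ac_of): u => u IH.
case: (boolP (is_leaf A u)) => L; first by exists u => //; exact: npaths_refl.
have [c Ac] := has_child L; have [w Lw Pw] := IH c Ac.
exists w => //; exact: leq_trans Pw (npaths_mono _ Ac).
Qed.

Lemma npaths_cherry w p : is_leaf A w -> A p w ->
  forall u, npaths A u w = (u == w) + npaths A u p.
Proof.
move=> Lw Apw; elim/(dag_ind ac_of) => u IH.
rewrite (npathsE ac_of u w) (npathsE ac_of u p).
rewrite (eq_bigr (fun c => (c == w) + npaths A c p)); last by move=> c Ac; exact: IH.
rewrite big_split /= sum_eq_pred.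
have -> : A u w = (u == p) by apply/idP/eqP => [Auw|->//]; exact: leaf_parent Lw Auw Apw.
by rewrite addnA.
Qed.

Lemma muvec_pos u (k : 'I_n.+1) : 0 < k -> muvec n A lab u k = mu_leaf A lab k u.
Proof. by move=> k0; rewrite ffunE eqn0Ngt k0. Qed.

Lemma muvec_0 u : muvec n A lab u ord0 = mu_ret A u.
Proof. by rewrite ffunE. Qed.

Lemma mu_leaf_lab u w : is_leaf A w -> mu_leaf A lab (lab w) u = npaths A u w.
Proof.
move=> Lw; rewrite /mu_leaf (big_pred1 w) // => x /=.
apply/andP/eqP => [[Lx /eqP E]|->]; last by rewrite eqxx.
exact: lab_inj.
Qed.

Lemma leaf_not_ret w : is_leaf A w -> is_reticulation A w = false.
Proof. by case/andP => /eqP E _; rewrite /is_reticulation E. Qed.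
Lemma leaf_not_tree w : is_leaf A w -> is_tree_node A w = false.
Proof. by case/andP => _ /eqP E; rewrite /is_tree_node E andbF. Qed.
Lemma tree_not_ret w : is_tree_node A w -> is_reticulation A w = false.
Proof. by case/andP => /eqP E _; rewrite /is_reticulation E. Qed.

Lemma sum_eq_pred' (P : pred V) (y : V) : \sum_(x | P x) (y == x) = P y.
Proof. rewrite -sum_eq_pred; apply: eq_bigr => x _; by rewrite eq_sym. Qed.

Lemma muvec_leaf w : is_leaf A w -> muvec n A lab w = delta n [:: lab w].
Proof.
move=> Lw; have /andP[l0 _] := lab_rng Lw.
apply/ffunP => k; rewrite !ffunE inE.
case: eqP => [k0|k0].
  rewrite /mu_ret (eq_bigr (fun h => nat_of_bool (w == h))); last by move=> h _; exact: npaths_leaf.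
  rewrite sum_eq_pred' leaf_not_ret // k0; case: eqP => // E; by rewrite -E in l0.
rewrite /mu_leaf (eq_bigr (fun h => nat_of_bool (w == h))); last by move=> h _; exact: npaths_leaf.
by rewrite sum_eq_pred' Lw /= eq_sym.
Qed.

Lemma z0 (k : 'I_n.+1) : 0 < k -> (0 == val k) = false.
Proof. by move=> k0; rewrite eq_sym; apply/negbTE; rewrite -lt0n. Qed.

Lemma key (i j : 'I_n.+1) u : 0 < i -> 0 < j -> i != j ->
  is_leaf A u || is_tree_node A u -> muvec n A lab u = delta n [:: val i; val j] ->
  exists c1 c2, [/\ A u c1, A u c2, is_leaf A c1 & is_leaf A c2] /\
     [/\ c1 != c2, (lab c1 == i) || (lab c1 == j) & (lab c2 == i) || (lab c2 == j)].
Proof.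
move=> i0 j0 nij VT E.
case/orP: VT => [L|T].
  have Ei := congr1 (fun f : {ffun 'I_n.+1 -> nat} => f i) E; have Ej := congr1 (fun f : {ffun 'I_n.+1 -> nat} => f j) E.
  move: Ei Ej; rewrite /= muvec_leaf // !ffunE !inE !eqxx /= orbT.
  case: eqP => // Hi; case: eqP => // Hj.
  by move: nij; rewrite -val_eqE /= Hi Hj eqxx.
have [c1 [c2 [n12 A1 A2 EA Enp]]] := tree_split T.
have Hleaf : forall w, is_leaf A w -> npaths A u w = ((lab w == i) || (lab w == j)).
  move=> w Lw; have /andP[l0 ln] := lab_rng Lw.
  have lw : lab w < n.+1 by rewrite ltnS.
  have kv : val (inord (lab w) : 'I_n.+1) = lab w := inordK lw.
  have := congr1 (fun f : {ffun 'I_n.+1 -> nat} => f (inord (lab w))) E.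
  by rewrite /= muvec_pos kv ?mu_leaf_lab // ffunE kv !inE.
have Hret : forall h, is_reticulation A h -> npaths A u h = 0.
  move=> h Rh; have := congr1 (fun f : {ffun 'I_n.+1 -> nat} => f ord0) E; rewrite /= muvec_0 ffunE /= !inE !z0 //.
  rewrite /mu_ret (bigD1 h) //=; lia.
have Hge : forall v, npaths A c1 v + npaths A c2 v <= npaths A u v by move=> v; rewrite Enp; lia.
have Hge' : forall v, npaths A c2 v + npaths A c1 v <= npaths A u v by move=> v; rewrite Enp; lia.
have Hlab : forall z, is_leaf A z -> 0 < npaths A u z -> ((lab z == i) || (lab z == j)).
  by move=> z Lz; rewrite Hleaf //; case: (_ || _).
have Hle1 : forall z, is_leaf A z -> npaths A u z <= 1.
  by move=> z Lz; rewrite Hleaf //; case: (_ || _).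
have sub : forall c c', A u c -> (forall v, npaths A c v + npaths A c' v <= npaths A u v) -> is_leaf A c.
  move=> c c' Ac Hc.
  have Rc : is_reticulation A c = false.
    apply/negP => Rc; exact: nar1 (Hc c) (Hret _ Rc) (npaths_refl c).
  have nRc := child_not_root Ac.
  move: (cls c); rewrite Rc (negbTE nRc) /= orbF; case/orP => // Tc.
  exfalso; have [d1 [d2 [_ Ad1 Ad2 _ Ed]]] := tree_split Tc.
  have [x1 L1 P1] := reach_leaf d1; have [x2 L2 P2] := reach_leaf d2.
  have [y Ly Py] := reach_leaf c'.
  have Hd : forall v, npaths A d1 v + npaths A d2 v <= npaths A c v.
    by move=> v; rewrite Ed -addnA leq_addl.
  have G1 : 0 < npaths A u x1 := narG1 (Hc x1) (Hd x1) P1.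
  have G2 : 0 < npaths A u x2 := narG2 (Hc x2) (Hd x2) P2.
  have Gy : 0 < npaths A u y := narGy (Hc y) Py.
  have B1 := Hle1 x1 L1; have B2 := Hle1 x2 L2.
  have h1 := Hlab _ L1 G1; have h2 := Hlab _ L2 G2; have hy := Hlab _ Ly Gy.
  case: (pigeon h1 h2 hy) => [/(lab_inj L1 L2) e | [/(lab_inj L1 Ly) e | /(lab_inj L2 Ly) e]].
  - move: P2; rewrite -e => P2'; exact: nar2 (Hc x1) (Hd x1) P1 P2' B1.
  - move: Py; rewrite -e => Py'. exact: nar3 (Hc x1) (Hd x1) P1 Py' B1.
  - move: Py; rewrite -e => Py'; exact: nar4 (Hc x2) (Hd x2) P2 Py' B2.
have L1 := sub c1 c2 A1 Hge; have L2 := sub c2 c1 A2 Hge'.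
exists c1, c2; do 2!split => //; apply: Hlab => //.
  exact: leq_trans (npaths_refl c1) (npaths_mono _ A1).
exact: leq_trans (npaths_refl c2) (npaths_mono _ A2).
Qed.

End Net.

Unset Implicit Arguments.

Theorem mainTheorem3 (n : nat) (V : finType) (A : rel V) (lab : V -> nat)
  (i j : 'I_n.+1) :
  is_network n A lab -> 0 < val i -> 0 < val j -> i != j ->
  (net_cherry A lab (val i) (val j) <-> ms_cherry (mu_rep n A lab) i j).
Proof.
move=> HN i0 j0 nij.
have nijv : val i != val j by [].
split.
- case=> [wi [wj [p [Li [Lj [li [lj [Ai Aj]]]]]]]].
  have nw : wi != wj by apply/eqP => E; move: nijv; rewrite -li -lj E eqxx.
  have Tp : is_tree_node A p.
    have O2 : 2 <= outdeg A p.
      have := cards2 wi wj; rewrite nw => <-; apply: subset_leq_card.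
      by apply/subsetP => x; rewrite !inE => /orP[] /eqP ->.
    move: (cls HN p); rewrite /is_root /is_leaf /is_reticulation.
    by case/or4P => [H|H|->//|H]; move/andP: H => [_ /eqP Eo]; rewrite Eo in O2.
  have Lp : is_leaf A p = false by apply/negP => Lp'; rewrite (leaf_not_tree Lp') in Tp.
  have [c1 [c2 [n12 A1 A2 EA Enp]]] := tree_split HN Tp.
  have Hp : forall v, npaths A p v = (p == v) + ((wi == v) + (wj == v)).
    move=> v; move: (EA wi) (EA wj); rewrite Ai Aj.
    move=> /esym/orP[/eqP e1|/eqP e1] /esym/orP[/eqP e2|/eqP e2].
    - by rewrite e1 e2 eqxx in nw.
    - by rewrite Enp -e1 -e2 !(npaths_leaf HN) // addnA.
    - by rewrite Enp -e1 -e2 !(npaths_leaf HN) // -addnA [X in _ + X]addnC.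
    - by rewrite e1 e2 eqxx in nw.
  have neq : forall x h, is_reticulation A h -> is_reticulation A x = false -> (x == h) = false.
    by move=> x h Rh Rx; apply/eqP => E; rewrite E Rh in Rx.
  have MuP : muvec n A lab p = delta n [:: val i; val j].
    apply/ffunP => k; rewrite !ffunE !inE.
    case: eqP => [k0|k0].
      rewrite /mu_ret big1; last first.
        by move=> h Rh; rewrite Hp (neq p h Rh (tree_not_ret Tp)) (neq wi h Rh (leaf_not_ret Li)) (neq wj h Rh (leaf_not_ret Lj)).
      by rewrite k0 !(z0 i0) !(z0 j0).
    rewrite /mu_leaf (eq_bigr (fun x => (p == x) + ((wi == x) + (wj == x)))); last first.
      by move=> x _; exact: Hp.
    rewrite !big_split /= !sum_eq_pred' Lp Li Lj li lj /= (eq_sym (val i)) (eq_sym (val j)).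
    case: eqP => [->|_]; first by rewrite (negbTE nijv).
    by case: eqP.
  split.
  + rewrite /mu_rep count_map count_filter.
    rewrite (@eq_count _ _ (pred1 p)); first by rewrite count_uniq_mem ?enum_uniq // mem_enum.
    move=> u /=; apply/andP/eqP => [[/eqP Eu VTu]|->]; last by rewrite MuP eqxx Tp orbT.
    have [c1' [c2' [[A1' _ L1' _] [_ l1 _]]]] := key HN i0 j0 nij VTu Eu.
    case/orP: l1 => /eqP l1.
      have e := lab_inj HN L1' Li (etrans l1 (esym li)); rewrite e in A1'.
      exact: leaf_parent Li A1' Ai.
    have e := lab_inj HN L1' Lj (etrans l1 (esym lj)); rewrite e in A1'.
    exact: leaf_parent Lj A1' Aj.
  + move=> x /mapP [u]; rewrite mem_filter => /andP[VTu _] -> nx1 nx2.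
    rewrite !muvec_pos // -li -lj !(mu_leaf_lab HN) //.
    case/orP: VTu => [Lu|Tu].
      rewrite !(npaths_leaf HN) //.
      case: eqP => [e|_]; first by rewrite e (muvec_leaf HN) // li eqxx in nx1.
      case: eqP => [e|_] //; by rewrite e (muvec_leaf HN) // lj eqxx in nx2.
    have nl : forall w, is_leaf A w -> (u == w) = false.
      by move=> w Lw; apply/eqP => e; rewrite e (leaf_not_tree Lw) in Tu.
    by rewrite (npaths_cherry HN Li Ai) (npaths_cherry HN Lj Aj) !nl.
- case=> [C1 _].
  have : delta n [:: val i; val j] \in mu_rep n A lab.
    by case: (boolP (_ \in _)) => // /count_memPn; rewrite C1.
  case/mapP => u; rewrite mem_filter => /andP[VTu _] Eu.
  have [c1 [c2 [[A1 A2 L1 L2] [n12 l1 l2]]]] := key HN i0 j0 nij VTu (esym Eu).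
  have nl : lab c1 != lab c2.
    by apply/eqP => e; rewrite (lab_inj HN L1 L2 e) eqxx in n12.
  case/orP: l1 => /eqP l1.
    exists c1, c2, u; do !split => //.
    by case/orP: l2 => /eqP l2 //; rewrite l1 l2 eqxx in nl.
  exists c2, c1, u; do !split => //.
  by case/orP: l2 => /eqP l2 //; rewrite l1 l2 eqxx in nl.
Qed.
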